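(* Let $\mathcal{R}$ be an LCTRS all of whose rules $\ell\to r~[\varphi]$ satisfy $\mathcal{V}ar(r)\subseteq\mathcal{V}ar(\ell,\varphi)$ and are left-value-free and left-TV-linear. For constrained $\exists$-terms $(\exists\vec{x}:\eta.\ s)~[\phi]$ and $(\exists\vec{y}:\delta.\ t)~[\psi]$ with $\{\vec{x}\}\cap\mathcal{V}ar(\phi)=\emptyset$ and $\{\vec{y}\}\cap\mathcal{V}ar(\psi)=\emptyset$, if $(\exists\vec{x}:\eta.\ s)~[\phi]\rightharpoonup_{\mathcal{R}}(\exists\vec{y}:\delta.\ t)~[\psi]$, then both of the following hold: (1) for every substitution $\theta$ respecting $\phi\land\eta$, there exists a substitution $\sigma$ respecting $\psi\land\delta$ such that $s\theta\to_{\mathcal{R}} t\sigma$; (2) for every substitution $\sigma$ respecting $\psi\land\delta$, there exists a substitution $\theta$ respecting $\phi\land\eta$ such that $s\theta\to_{\mathcal{R}} t\sigma$.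
   Context: LCTRS setting: signature $\Sigma=\Sigma_{\mathit{theory}}\cup\Sigma_{\mathit{terms}}$, theory symbols interpreted over universes, $\mathrm{Val}$ the value constants, theory includes $\mathsf{bool}$, connectives and $=$ interpreted as usual; constraints are theory terms of sort $\mathsf{bool}$, $[\![\cdot]\!]$ evaluates ground theory terms. A substitution $\gamma$ respects constraint $\phi$ if $x\gamma\in\mathrm{Val}$ for $x\in\mathcal{V}ar(\phi)$ and $[\![\phi\gamma]\!]=\mathsf{true}$. $\phi\Rightarrow(\exists\vec{z}.\ \psi)$ (for constraints $\phi,\psi$) is valid iff for every substitution $\gamma$ mapping $\mathcal{V}ar(\phi)\cup(\mathcal{V}ar(\psi)\setminus\{\vec z\})$ to values there is $\gamma'$ with $\mathcal{D}om(\gamma')=\{\vec z\}$, values as range, and $[\![\phi\gamma\Rightarrow\psi\gamma'\gamma]\!]=\mathsf{true}$. A constrained rewrite rule $\ell\to r~[\varphi]$: $\ell,r$ terms of the same sort, $\varphi$ a constraint, $\ell$ neither a theory term nor a variable; logical variables $\mathcal{LV}ar=\mathcal{V}ar(\varphi)\cup(\mathcal{V}ar(r)\setminus\mathcal{V}ar(\ell))$; $\gamma$ respects the rule if it maps logical variables to values and $[\![\varphi\gamma]\!]=\mathsf{true}$. $\mathcal{R}_{\mathit{calc}}=\{f(x_1,\ldots,x_n)\to y~[y=f(x_1,\ldots,x_n)]\mid f\in\Sigma_{\mathit{theory}}\setminus\mathrm{Val}\}$. $s\to_{\mathcal{R}}t$ iff there are a rule $\ell\to r~[\varphi]\in\mathcal{R}\cup\mathcal{R}_{\mathit{calc}}$,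 a position $p$, and $\gamma$ respecting the rule with $s|_p=\ell\gamma$, $t=s[r\gamma]_p$. Left-value-free: $\ell$ contains no value; left-TV-linear: each variable of theory sort occurs at most once in $\ell$. An $\exists$-term $(\exists\vec{x}:\eta.\ s)$ consists of a finite variable sequence $\vec{x}$, a satisfiable constraint $\eta$ and a term $s$ with $\{\vec x\}\subseteq\mathcal{V}ar(\eta)\cap\mathcal{V}ar(s)$; a constrained $\exists$-term $(\exists\vec{x}:\eta.\ s)~[\phi]$ adds a constraint $\phi$ with $\mathcal{V}ar(\eta)\setminus\{\vec x\}\subseteq\mathcal{V}ar(\phi)$. Constrained rewriting of constrained $\exists$-terms: $(\exists\vec{x}:\eta.\ s)~[\phi]\rightharpoonup_{\mathcal{R}}(\exists\vec{y}:\delta.\ t)~[\psi]$ iff (after renaming $\vec x$ so that $\{\vec x\}\cap\mathcal{V}ar(s,\phi)=\emptyset$) there exist a rule $\ell\to r~[\varphi]\in\mathcal{R}\cup\mathcal{R}_{\mathit{calc}}$, a position $p$ of $s$ and a substitution $\gamma$ such that: $s|_p=\ell\gamma$, $t=s[r\gamma]_p$, $\psi=\phi\land\varphi\gamma$; $x\gamma\in\mathrm{Val}\cup\mathcal{V}ar(\phi)$ for every $x\in\mathcal{V}ar(\varphi)\cap\mathcal{V}ar(\ell)$; $x\gamma\in\mathcal{V}\setminus(\mathcal{V}ar(s)\cup\{\vec x\})$ (a fresh variable) for every $x\in\mathcal{V}ar(\varphi)\setminus\mathcal{V}ar(\ell)$; $\phi\Rightarrow(\exists\vec z.\ \varphi\gamma)$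 is valid; and $(\exists\vec y.\ \delta)=(\exists\vec x,\vec z.\ (\eta\land\varphi\gamma))$, where $\{\vec z\}=\{x\gamma\mid x\in\mathcal{V}ar(\varphi)\setminus\mathcal{V}ar(\ell)\}$ ($\psi,\delta$ may be replaced by equivalent constraints). *)

(* Defs.v *)
From Stdlib Require Import List.
Import ListNotations.

Set Implicit Arguments.

(* Following the usual LCTRS convention, the universe of each theory sort
   is identified with the set of value constants of that sort, so that the
   interpretation of a theory symbol maps (lists of) values to a value. *)
Record lctrs := {
  sort : Type;
  fsym : Type;
  var : Type;
  vsort : var -> sort;
  fdom : fsym -> list sort;
  fcod : fsym -> sort;
  theory_sym : fsym -> Prop;
  value : fsym -> Prop;
  theory_sort : sort -> Prop;
  interp : fsym -> list fsym -> fsym;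
  boolS : sort;
  trueF : fsym; falseF : fsym;
  andF : fsym; implF : fsym;
  eqF : sort -> fsym;
  value_theory : forall v, value v -> theory_sym v /\ fdom v = [];
  theory_sym_sorts : forall f, theory_sym f ->
     theory_sort (fcod f) /\ Forall theory_sort (fdom f);
  interp_value : forall v, value v -> interp v [] = v;
  interp_sorted : forall f args, theory_sym f ->
     Forall2 (fun a s => value a /\ fcod a = s) args (fdom f) ->
     value (interp f args) /\ fcod (interp f args) = fcod f;
  bool_theory : theory_sort boolS;
  true_value : value trueF /\ fcod trueF = boolS;
  false_value : value falseF /\ fcod falseF = boolS;
  true_neq_false : trueF <> falseF;
  bool_values : forall v, value v -> fcod v = boolS -> v = trueF \/ v = falseF;
  and_sig : theory_sym andF /\ fdom andF = [boolS; boolS] /\ fcod andF = boolS;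
  and_sem : forall a b, value a -> fcod a = boolS -> value b -> fcod b = boolS ->
     (interp andF [a; b] = trueF <-> (a = trueF /\ b = trueF));
  impl_sig : theory_sym implF /\ fdom implF = [boolS; boolS] /\ fcod implF = boolS;
  impl_sem : forall a b, value a -> fcod a = boolS -> value b -> fcod b = boolS ->
     (interp implF [a; b] = trueF <-> (a = trueF -> b = trueF));
  eq_sig : forall i, theory_sort i ->
     theory_sym (eqF i) /\ fdom (eqF i) = [i; i] /\ fcod (eqF i) = boolS;
  eq_sem : forall i a b, theory_sort i ->
     value a -> fcod a = i -> value b -> fcod b = i ->
     (interp (eqF i) [a; b] = trueF <-> a = b)
}.

Section LCTRS.
Variable L : lctrs.

Inductive term : Type :=
| Var (x : var L)
| Fun (f : fsym L) (ts : list term).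

Fixpoint vars (t : term) : list (var L) :=
  match t with
  | Var x => [x]
  | Fun _ ts => flat_map vars ts
  end.

Fixpoint syms (t : term) : list (fsym L) :=
  match t with
  | Var _ => []
  | Fun f ts => f :: flat_map syms ts
  end.

Fixpoint subst (g : var L -> term) (t : term) : term :=
  match t with
  | Var x => g x
  | Fun f ts => Fun f (map (subst g) ts)
  end.

Fixpoint wsorted (t : term) (so : sort L) {struct t} : Prop :=
  match t with
  | Var x => vsort L x = so
  | Fun f ts => fcod L f = so /\
      (fix go (ts : list term) (ss : list (sort L)) {struct ts} : Prop :=
         match ts, ss with
         | [], [] => True
         | t :: ts', s :: ss' => wsorted t s /\ go ts' ss'
         | _, _ => False
         end) ts (fdom L f)
  end.

Definition subst_ok (g : var L -> term) : Prop :=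
  forall x, wsorted (g x) (vsort L x).

Definition theory_term (t : term) : Prop :=
  forall f, In f (syms t) -> theory_sym L f.

Definition constraint (c : term) : Prop :=
  theory_term c /\ wsorted c (boolS L).

(* [[ . ]] on ground theory terms (variables never reach it in our uses) *)
Fixpoint eval (t : term) : fsym L :=
  match t with
  | Var _ => falseF L
  | Fun f ts => interp L f (map eval ts)
  end.

Definition is_val (t : term) : Prop :=
  exists v, value L v /\ t = Fun v [].

Definition cand (a b : term) : term := Fun (andF L) [a; b].
Definition cimpl (a b : term) : term := Fun (implF L) [a; b].

Definition respects (g : var L -> term) (c : term) : Prop :=
  (forall x, In x (vars c) -> is_val (g x)) /\ eval (subst g c) = trueF L.

Definition satisfiable (c : term) : Prop :=
  exists g, subst_ok g /\ respects g c.

(* validity of  phi => (exists zs. psi) *)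
Definition valid_impl_ex (phi : term) (zs : list (var L)) (psi : term) : Prop :=
  forall g, subst_ok g ->
    (forall x, In x (vars phi) \/ (In x (vars psi) /\ ~ In x zs) -> is_val (g x)) ->
    exists g', subst_ok g' /\
      (forall x, ~ In x zs -> g' x = Var x) /\
      (forall x, In x zs -> is_val (g' x)) /\
      eval (subst g (cimpl phi (subst g' psi))) = trueF L.

Definition cequiv (c d : term) : Prop :=
  (forall x, In x (vars c) <-> In x (vars d)) /\
  forall g, subst_ok g -> (forall x, In x (vars c) -> is_val (g x)) ->
    (eval (subst g c) = trueF L <-> eval (subst g d) = trueF L).

(* psi is a constraint equivalent to  phi /\ (exists zs. chi) : its variables
   are the free variables of that formula, and it has the same truth value
   under every valuation of them into values. *)
Definition cequiv_and_ex (psi phi : term) (zs : list (var L)) (chi : term) : Prop :=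
  (forall x, In x (vars psi) <->
     (In x (vars phi) \/ (In x (vars chi) /\ ~ In x zs))) /\
  forall g, subst_ok g -> (forall x, In x (vars psi) -> is_val (g x)) ->
    (eval (subst g psi) = trueF L <->
     (eval (subst g phi) = trueF L /\
      exists g', subst_ok g' /\
        (forall x, ~ In x zs -> g' x = Var x) /\
        (forall x, In x zs -> is_val (g' x)) /\
        eval (subst g (subst g' chi)) = trueF L)).

Record rule := mkRule { lhs : term; rhs : term; cond : term }.

Definition wf_rule (rl : rule) : Prop :=
  (exists so, wsorted (lhs rl) so /\ wsorted (rhs rl) so) /\
  constraint (cond rl) /\
  ~ theory_term (lhs rl) /\
  (forall x, lhs rl <> Var x).

Definition left_value_free (l : term) : Prop :=
  forall f, In f (syms l) -> ~ value L f.

Definition left_TV_linear (l : term) : Prop :=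
  forall x, theory_sort L (vsort L x) ->
    forall l1 l2, vars l = l1 ++ x :: l2 -> ~ In x l2.

Definition calc_rule (rl : rule) : Prop :=
  exists f xs y,
    theory_sym L f /\ ~ value L f /\ NoDup xs /\
    map (vsort L) xs = fdom L f /\ ~ In y xs /\ vsort L y = fcod L f /\
    rl = mkRule (Fun f (map Var xs)) (Var y)
                (Fun (eqF L (fcod L f)) [Var y; Fun f (map Var xs)]).

Definition rule_of (R : rule -> Prop) (rl : rule) : Prop := R rl \/ calc_rule rl.

Definition respects_rule (g : var L -> term) (rl : rule) : Prop :=
  (forall x, In x (vars (cond rl)) \/
             (In x (vars (rhs rl)) /\ ~ In x (vars (lhs rl))) -> is_val (g x)) /\
  eval (subst g (cond rl)) = trueF L.

Inductive repl (u v : term) : term -> term -> Prop :=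
| repl_root : repl u v u v
| repl_arg : forall f ts1 a b ts2, repl u v a b ->
    repl u v (Fun f (ts1 ++ a :: ts2)) (Fun f (ts1 ++ b :: ts2)).

Definition step (R : rule -> Prop) (s t : term) : Prop :=
  exists rl g, rule_of R rl /\ subst_ok g /\ respects_rule g rl /\
    repl (subst g (lhs rl)) (subst g (rhs rl)) s t.

(* constrained exists-terms  (exists ebnd : eeta. ebody) [econ] *)
Record cterm := mkC { ebnd : list (var L); eeta : term; ebody : term; econ : term }.

Definition is_cterm (c : cterm) : Prop :=
  constraint (eeta c) /\ satisfiable (eeta c) /\
  (forall x, In x (ebnd c) -> In x (vars (eeta c)) /\ In x (vars (ebody c))) /\
  (exists so, wsorted (ebody c) so) /\
  constraint (econ c) /\
  (forall x, In x (vars (eeta c)) -> ~ In x (ebnd c) -> In x (vars (econ c))).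

(* one step, for a representative whose bound variables are already chosen *)
Definition basic_cstep (R : rule -> Prop) (c d : cterm) : Prop :=
  exists rl g zs,
    rule_of R rl /\ subst_ok g /\
    repl (subst g (lhs rl)) (subst g (rhs rl)) (ebody c) (ebody d) /\
    (forall x, In x (vars (cond rl)) -> In x (vars (lhs rl)) ->
       is_val (g x) \/ exists w, g x = Var w /\ In w (vars (econ c))) /\
    (forall x, In x (vars (cond rl)) -> ~ In x (vars (lhs rl)) ->
       exists w, g x = Var w /\ ~ In w (vars (ebody c)) /\ ~ In w (ebnd c)) /\
    (forall w, In w zs <->
       exists x, In x (vars (cond rl)) /\ ~ In x (vars (lhs rl)) /\ g x = Var w) /\
    valid_impl_ex (econ c) zs (subst g (cond rl)) /\
    cequiv_and_ex (econ d) (econ c) zs (subst g (cond rl)) /\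
    (* (exists ys. delta) = (exists xs, zs. (eta /\ phi gamma)) *)
    (forall w, In w (ebnd d) <-> In w (ebnd c) \/ In w zs) /\
    cequiv (eeta d) (cand (eeta c) (subst g (cond rl))).

Definition rename_bound (rho : var L -> var L) (c : cterm) : cterm :=
  mkC (map rho (ebnd c)) (subst (fun v => Var (rho v)) (eeta c))
      (subst (fun v => Var (rho v)) (ebody c)) (econ c).

Definition good_renaming (rho : var L -> var L) (c : cterm) : Prop :=
  (forall v, ~ In v (ebnd c) -> rho v = v) /\
  (forall v, vsort L (rho v) = vsort L v) /\
  (forall a b, In a (ebnd c) -> In b (ebnd c) -> rho a = rho b -> a = b) /\
  (forall a, In a (ebnd c) ->
     ~ In (rho a) (vars (econ c)) /\
     (In (rho a) (vars (ebody c)) -> In (rho a) (ebnd c)) /\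
     (In (rho a) (vars (eeta c)) -> In (rho a) (ebnd c))).

Definition cstep (R : rule -> Prop) (c d : cterm) : Prop :=
  exists rho, good_renaming rho c /\ basic_cstep R (rename_bound rho c) d.

End LCTRS.

(* Main.v *)
Require Import Defs.
From Stdlib Require Import List ClassicalEpsilon.
Import ListNotations.
Set Implicit Arguments.

Definition term_ind' (L : lctrs) (P : term L -> Prop)
  (HV : forall x, P (Var L x)) (HF : forall f ts, Forall P ts -> P (Fun f ts)) :
  forall t, P t :=
  fix F t := match t with
  | Var _ x => HV x
  | Fun f ts => HF f ts ((fix G (us : list (term L)) : Forall P us :=
        match us with
        | [] => Forall_nil P
        | u :: us' => @Forall_cons _ P u us' (F u) (G us')
        end) ts)
  end.

Lemma subst_comp (L : lctrs) (g h : var L -> term L) t :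
  subst g (subst h t) = subst (fun x => subst g (h x)) t.
Proof.
  induction t using term_ind'; simpl; auto.
  f_equal. rewrite map_map. apply map_ext_in. intros u Hu.
  rewrite Forall_forall in H. auto.
Qed.

Lemma subst_ext (L : lctrs) (g h : var L -> term L) t :
  (forall x, In x (vars t) -> g x = h x) -> subst g t = subst h t.
Proof.
  induction t using term_ind'; simpl; intros Hx.
  - apply Hx; simpl; auto.
  - f_equal. apply map_ext_in. intros u Hu.
    rewrite Forall_forall in H. apply H; auto.
    intros x Hxu. apply Hx. apply in_flat_map. eauto.
Qed.

Lemma vars_subst (L : lctrs) (g : var L -> term L) t w :
  In w (vars (subst g t)) <-> exists x, In x (vars t) /\ In w (vars (g x)).
Proof.
  induction t using term_ind'; simpl.
  - split. intros; exists x; auto. intros [y [[<-|[]] Hy]]; auto.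
  - rewrite Forall_forall in H.
    rewrite in_flat_map. split.
    + intros [u [Hu Hw]]. apply in_map_iff in Hu. destruct Hu as [v [<- Hv]].
      apply H in Hw; auto. destruct Hw as [x [Hx1 Hx2]]. exists x; split; auto.
      apply in_flat_map. eauto.
    + intros [x [Hx1 Hx2]]. apply in_flat_map in Hx1. destruct Hx1 as [v [Hv Hxv]].
      exists (subst g v). split. apply in_map; auto. apply H; eauto.
Qed.

Lemma wsorted_Fun (L : lctrs) f (ts : list (term L)) so :
  wsorted (Fun f ts) so <-> fcod L f = so /\ Forall2 (@wsorted L) ts (fdom L f).
Proof.
  simpl. split; intros [H1 H2]; split; auto; revert H2; generalize (fdom L f).
  - induction ts as [|a ts IH]; intros l; destruct l; simpl; try tauto.
    + intros; constructor.
    + intros [Ha Hb]. constructor; auto.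
  - induction ts as [|a ts IH]; intros l; destruct l; simpl; intros H; inversion H; subst; auto.
    split; [exact H4 | exact (IH l H6)].
Qed.

Lemma wsorted_subst (L : lctrs) (g : var L -> term L) t so :
  subst_ok g -> wsorted t so -> wsorted (subst g t) so.
Proof.
  intros Hg. revert so. induction t using term_ind'; intros so Hw.
  - simpl in Hw. subst. apply Hg.
  - change (subst g (Fun f ts)) with (Fun f (map (subst g) ts)).
    rewrite wsorted_Fun in *. destruct Hw as [Hw1 Hw2]. split; auto.
    clear Hw1. revert H. induction Hw2; simpl; intros HF; constructor;
    inversion HF; auto.
Qed.

Lemma is_val_subst (L : lctrs) (g : var L -> term L) t : is_val t -> subst g t = t.
Proof. intros [v [_ ->]]. reflexivity. Qed.

Lemma eval_typed (L : lctrs) (g : var L -> term L) t so :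
  theory_term t -> wsorted t so -> (forall x, In x (vars t) -> is_val (g x)) ->
  subst_ok g -> value L (eval (subst g t)) /\ fcod L (eval (subst g t)) = so.
Proof.
  intros Ht Hw Hv Hg. revert so Ht Hw Hv. induction t using term_ind'; intros so Ht Hw Hv.
  - simpl in *. destruct (Hv x (or_introl eq_refl)) as [v [Hvv Hgx]].
    pose proof (Hg x) as Hs. rewrite Hgx in *. simpl.
    rewrite interp_value; auto. split; auto. apply wsorted_Fun in Hs. destruct Hs; congruence.
  - apply wsorted_Fun in Hw. destruct Hw as [Hw1 Hw2].
    assert (Hf : theory_sym L f) by (apply Ht; simpl; auto).
    simpl. rewrite <- Hw1. apply interp_sorted; auto.
    assert (HA : forall u, In u ts -> theory_term u /\ (forall x, In x (vars u) -> is_val (g x))).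
    { intros u Hu. split.
      - intros f' Hf'. apply Ht. simpl. right. apply in_flat_map. eauto.
      - intros x Hx. apply Hv. simpl. apply in_flat_map. eauto. }
    rewrite map_map. clear Hw1 Ht Hv.
    induction Hw2; simpl; constructor.
    + inversion H as [|? ? Hx Hl]; subst. apply Hx; auto; apply HA; simpl; auto.
    + inversion H as [|? ? Hx Hl]; subst. apply IHHw2; auto. intros u Hu; apply HA; simpl; auto.
Qed.

Lemma repl_subst (L : lctrs) (g : var L -> term L) u v s t :
  repl u v s t -> repl (subst g u) (subst g v) (subst g s) (subst g t).
Proof.
  induction 1; simpl. constructor.
  rewrite !map_app. simpl. constructor. auto.
Qed.
Lemma cond_constraint (L : lctrs) (R : rule L -> Prop)
  (HRwf : forall rl, R rl -> wf_rule rl) rl :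
  rule_of R rl -> constraint (cond rl).
Proof.
  intros [H|H]. apply HRwf in H. apply H.
  destruct H as [f [xs [y [Hf [Hnv [Hnd [Hxs [Hy [Hys ->]]]]]]]]]. simpl.
  destruct (theory_sym_sorts L f Hf) as [Hts _].
  destruct (eq_sig L _ Hts) as [He1 [He2 He3]].
  split.
  - intros g. simpl. intros [<-|Hg]; auto. rewrite app_nil_r in Hg.
    destruct Hg as [<-|Hg]; auto. exfalso. clear -Hg.
    induction xs; simpl in *; auto. 
  - change (wsorted (Fun (eqF L (fcod L f)) [Var L y; Fun f (map (Var L) xs)]) (boolS L)).
    apply wsorted_Fun. split; auto. rewrite He2. constructor. simpl; auto.
    constructor; [|constructor]. apply wsorted_Fun. split; auto. rewrite <- Hxs.
    clear. induction xs; simpl; constructor; simpl; auto.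
Qed.

Lemma rhs_in_cond (L : lctrs) (R : rule L -> Prop)
  (HRvars : forall rl, R rl -> incl (vars (rhs rl)) (vars (lhs rl) ++ vars (cond rl))) rl :
  rule_of R rl -> forall x, In x (vars (rhs rl)) -> ~ In x (vars (lhs rl)) -> In x (vars (cond rl)).
Proof.
  intros [H|H] x Hx Hnl.
  - apply HRvars in Hx; auto. apply in_app_or in Hx. tauto.
  - destruct H as [f [xs [y [Hf [Hnv [Hnd [Hxs [Hy [Hys ->]]]]]]]]]. simpl in *.
    destruct Hx as [<-|[]]. auto.
Qed.

Lemma vars_cand (L : lctrs) (a b : term L) x :
  In x (vars (cand a b)) <-> In x (vars a) \/ In x (vars b).
Proof. unfold cand. simpl. rewrite app_nil_r, in_app_iff. tauto. Qed.

Lemma cand_eval (L : lctrs) (g : var L -> term L) a b :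
  value L (eval (subst g a)) -> fcod L (eval (subst g a)) = boolS L ->
  value L (eval (subst g b)) -> fcod L (eval (subst g b)) = boolS L ->
  (eval (subst g (cand a b)) = trueF L <->
   eval (subst g a) = trueF L /\ eval (subst g b) = trueF L).
Proof. intros. apply and_sem; auto. Qed.

Lemma comp_ok (L : lctrs) (g h : var L -> term L) :
  subst_ok g -> subst_ok h -> subst_ok (fun x => subst g (h x)).
Proof. intros Hg Hh x. apply wsorted_subst; auto. Qed.

Theorem theorem3 (L : lctrs) (R : rule L -> Prop)
  (HRwf : forall rl, R rl -> wf_rule rl)
  (HRvars : forall rl, R rl -> incl (vars (rhs rl)) (vars (lhs rl) ++ vars (cond rl)))
  (HRlvf : forall rl, R rl -> left_value_free (lhs rl))
  (HRltv : forall rl, R rl -> left_TV_linear (lhs rl))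
  (c d : cterm L) (Hc : is_cterm c) (Hd : is_cterm d)
  (Hcx : forall x, In x (ebnd c) -> ~ In x (vars (econ c)))
  (Hdy : forall y, In y (ebnd d) -> ~ In y (vars (econ d)))
  (Hstep : cstep R c d) :
  (forall theta, subst_ok theta -> respects theta (cand (econ c) (eeta c)) ->
     exists sigma, subst_ok sigma /\ respects sigma (cand (econ d) (eeta d)) /\
       step R (subst theta (ebody c)) (subst sigma (ebody d))) /\
  (forall sigma, subst_ok sigma -> respects sigma (cand (econ d) (eeta d)) ->
     exists theta, subst_ok theta /\ respects theta (cand (econ c) (eeta c)) /\
       step R (subst theta (ebody c)) (subst sigma (ebody d))).
Proof.
  destruct Hstep as [rho [Hgr Hb]].
  destruct c as [xs eta s phi], d as [ys delta t psi].
  unfold rename_bound in Hb. cbn [ebnd eeta ebody econ] in *.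
  destruct Hb as [rl [ga [zs [Hrl [Hgok [Hrepl [Hcl [Hcnl [Hzs [Hvalid [Hpsi [Hbnd Hdelta]]]]]]]]]]]].
  cbn [ebnd eeta ebody econ] in *.
  destruct Hgr as [Hr1 [Hr2 [Hr3 Hr4]]]. cbn [ebnd eeta ebody econ] in *.
  destruct Hc as [Hceta [_ [Hcb [_ [Hcphi Hcetav]]]]].
  destruct Hd as [Hdeta [_ [_ [_ [Hdpsi _]]]]]. cbn [ebnd eeta ebody econ] in *.
  pose proof (cond_constraint HRwf Hrl) as Hcc.
  pose proof (rhs_in_cond HRvars Hrl) as Hrc.
  destruct Hpsi as [Hpsiv Hpsie]. destruct Hdelta as [Hdv Hde].
  set (condg := subst ga (cond rl)) in *.
  assert (Hgx : forall x, In x (vars (cond rl)) -> is_val (ga x) \/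
            exists w, ga x = Var L w /\ (In w zs \/ In w (vars phi))).
  { intros x Hx. destruct (classic (In x (vars (lhs rl)))) as [Hl|Hl].
    - destruct (Hcl x Hx Hl) as [H|[w [H1 H2]]]; auto. right; exists w; auto.
    - destruct (Hcnl x Hx Hl) as [w [H1 _]]. right. exists w. split; auto.
      left. apply Hzs. exists x. auto. }
  assert (Hcondvars : forall w, In w (vars condg) -> In w zs \/ In w (vars phi)).
  { intros w Hw. apply vars_subst in Hw. destruct Hw as [x [Hx Hw]].
    destruct (Hgx x Hx) as [[v [_ Hv]]|[w' [H1 H2]]]; rewrite ?Hv, ?H1 in Hw; simpl in Hw.
    - destruct Hw.
    - destruct Hw as [<-|[]]; auto. }
  split.
  - intros theta Hto [Htv Hte].
    assert (Htvphi : forall x, In x (vars phi) -> is_val (theta x)).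
    { intros x Hx; apply Htv, vars_cand; auto. }
    assert (Htveta : forall x, In x (vars eta) -> is_val (theta x)).
    { intros x Hx; apply Htv, vars_cand; auto. }
    pose proof (eval_typed _ (proj1 Hcphi) (proj2 Hcphi) Htvphi Hto) as Tphi.
    pose proof (eval_typed _ (proj1 Hceta) (proj2 Hceta) Htveta Hto) as Teta.
    apply cand_eval in Hte; try tauto. destruct Hte as [Ephi Eeta].
    set (theta' := fun w => match excluded_middle_informative (exists a, In a xs /\ rho a = w) with
                            | left H => theta (proj1_sig (constructive_indefinite_description _ H))
                            | right _ => theta w end).
    assert (T1 : forall a, In a xs -> theta' (rho a) = theta a).
    { intros a Ha. unfold theta'. destruct (excluded_middle_informative _) as [H|H].
      - destruct (constructive_indefinite_description _ H) as [b [Hb1 Hb2]]. simpl.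
        f_equal. apply Hr3; auto.
      - exfalso; apply H; eauto. }
    assert (T2 : forall w, (forall a, In a xs -> rho a <> w) -> theta' w = theta w).
    { intros w Hw. unfold theta'. destruct (excluded_middle_informative _) as [H|H]; auto.
      exfalso. destruct H as [a [Ha1 Ha2]]. exact (Hw a Ha1 Ha2). }
    assert (Hto' : subst_ok theta').
    { intros w. unfold theta'. destruct (excluded_middle_informative _) as [H|H]; auto.
      destruct (constructive_indefinite_description _ H) as [b [Hb1 Hb2]]. simpl.
      rewrite <- Hb2, Hr2. apply Hto. }
    assert (T3 : forall v, In v (vars s) \/ In v (vars eta) -> theta' (rho v) = theta v).
    { intros v Hv. destruct (classic (In v xs)) as [Hx|Hx]; auto.
      rewrite (Hr1 v Hx). apply T2. intros a Ha Hra. apply Hx.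
      destruct (Hr4 a Ha) as [_ [H1 H2]]. rewrite <- Hra.
      destruct Hv as [Hv|Hv]; [apply H1|apply H2]; rewrite Hra; auto. }
    assert (T4 : forall v, In v (vars phi) -> theta' v = theta v).
    { intros v Hv. apply T2. intros a Ha Hra. destruct (Hr4 a Ha) as [H _].
      apply H. rewrite Hra; auto. }
    assert (Hzsphi : forall w, In w zs -> ~ In w (vars phi)).
    { intros w Hw Hp. apply (Hdy w). apply Hbnd; auto. apply Hpsiv; auto. }
    destruct (Hvalid theta' Hto') as [g' [Hg'ok [Hg'id [Hg'val Himpl]]]].
    { intros x [Hx|[Hx Hnz]].
      - rewrite T4; auto.
      - destruct (Hcondvars x Hx) as [H|H]; [contradiction|]. rewrite T4; auto. }
    set (theta'' := fun w => subst theta' (g' w)).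
    assert (Hto'' : subst_ok theta'') by (apply comp_ok; auto).
    assert (T5 : forall w, ~ In w zs -> theta'' w = theta' w).
    { intros w Hw. unfold theta''. rewrite Hg'id; auto. }
    assert (T6 : forall w, In w zs -> theta'' w = g' w /\ is_val (g' w)).
    { intros w Hw. unfold theta''. split; [apply is_val_subst|]; auto. }
    assert (Hzs_s : forall w, In w zs -> ~ In w (vars (subst (fun v => Var L (rho v)) s)) /\ ~ In w (map rho xs)).
    { intros w Hw. apply Hzs in Hw. destruct Hw as [x [Hx1 [Hx2 Hx3]]].
      destruct (Hcnl x Hx1 Hx2) as [w' [H1 [H2 H3]]]. rewrite Hx3 in H1. injection H1 as ->.
      auto. }
    assert (Hphi'' : forall w, In w (vars phi) -> theta'' w = theta w).
    { intros w Hw. rewrite T5, T4; auto. intros Hz. apply (Hzsphi w Hz Hw). }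
    assert (Hrho'' : forall v, In v (vars s) \/ In v (vars eta) -> theta'' (rho v) = theta v).
    { intros v Hv. rewrite T5; auto. intros Hz. destruct (Hzs_s _ Hz) as [H1 H2].
      destruct (classic (In v xs)) as [Hx|Hx].
      - apply H2. apply in_map; auto.
      - rewrite (Hr1 v Hx) in *. destruct Hv as [Hv|Hv].
        + apply H1. apply vars_subst. exists v. rewrite (Hr1 v Hx). simpl; auto.
        + apply (Hzsphi v Hz). apply Hcetav; auto. }
    assert (Hcv : forall x, In x (vars (cond rl)) -> is_val (subst theta'' (ga x))).
    { intros x Hx. destruct (Hgx x Hx) as [Hv|[w [Hw [Hz|Hp]]]].
      - rewrite is_val_subst; auto.
      - rewrite Hw. simpl. rewrite (proj1 (T6 w Hz)). apply T6; auto.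
      - rewrite Hw. simpl. rewrite Hphi''; auto. }
    assert (Eeq2 : subst theta'' condg = subst (fun x => subst theta'' (ga x)) (cond rl))
      by (unfold condg; rewrite subst_comp; reflexivity).
    pose proof (eval_typed _ (proj1 Hcc) (proj2 Hcc) Hcv (comp_ok Hto'' Hgok)) as Tcond.
    rewrite <- Eeq2 in Tcond.
    assert (Econd : eval (subst theta'' condg) = trueF L).
    { assert (Eq : subst theta' (subst g' condg) = subst theta'' condg)
        by (rewrite subst_comp; reflexivity).
      change (interp L (implF L) [eval (subst theta' phi); eval (subst theta' (subst g' condg))] = trueF L) in Himpl.
      rewrite Eq in Himpl.
      assert (Eq2 : subst theta' phi = subst theta phi) by (apply subst_ext; auto).
      rewrite Eq2 in Himpl.
      exact (proj1 (impl_sem L _ _ (proj1 Tphi) (proj2 Tphi) (proj1 Tcond) (proj2 Tcond)) Himpl Ephi). }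
    assert (Hv_phi : forall w, In w (vars phi) -> is_val (theta'' w)).
    { intros w Hw. rewrite Hphi''; auto. }
    assert (Hv_cg : forall w, In w (vars condg) -> is_val (theta'' w)).
    { intros w Hw. destruct (classic (In w zs)) as [Hz|Hz].
      - rewrite (proj1 (T6 w Hz)). apply T6; auto.
      - destruct (Hcondvars w Hw); [contradiction|auto]. }
    assert (Hv_psi : forall w, In w (vars psi) -> is_val (theta'' w)).
    { intros w Hw. apply Hpsiv in Hw. destruct Hw as [Hw|[Hw _]]; auto. }
    assert (Eeq1 : subst theta'' (subst (fun v => Var L (rho v)) eta) = subst theta eta)
      by (rewrite subst_comp; apply subst_ext; intros; simpl; apply Hrho''; auto).
    assert (Hv_eta' : forall w, In w (vars (subst (fun v => Var L (rho v)) eta)) -> is_val (theta'' w)).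
    { intros w Hw. apply vars_subst in Hw. destruct Hw as [v [Hv [<-|[]]]].
      rewrite Hrho''; auto. }
    assert (Hv_delta : forall w, In w (vars delta) -> is_val (theta'' w)).
    { intros w Hw. apply Hdv, vars_cand in Hw. destruct Hw; auto. }
    pose proof (eval_typed _ (proj1 Hdpsi) (proj2 Hdpsi) Hv_psi Hto'') as Tpsi.
    pose proof (eval_typed _ (proj1 Hdeta) (proj2 Hdeta) Hv_delta Hto'') as Tdelta.
    exists theta''. split; [exact Hto''|split].
    + split.
      * intros x Hx. apply vars_cand in Hx. destruct Hx; auto.
      * apply cand_eval; try tauto. split.
        -- apply (Hpsie theta'' Hto'' Hv_psi). split.
           ++ rewrite (subst_ext theta'' theta phi); auto.
           ++ exists g'. split; [auto|split; [auto|split; [auto|]]].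
              rewrite subst_comp.
              rewrite (subst_ext _ theta'' condg); auto.
              intros w _. destruct (classic (In w zs)) as [Hz|Hz].
              ** rewrite (proj1 (T6 w Hz)). apply is_val_subst. apply T6; auto.
              ** rewrite Hg'id; auto.
        -- apply (Hde theta'' Hto'' Hv_delta).
           apply cand_eval; rewrite ?Eeq1; try tauto.
    + exists rl, (fun x => subst theta'' (ga x)). split; [exact Hrl|split; [apply comp_ok; auto|split]].
      * split.
        -- intros x [Hx|[Hx Hnl]]; apply Hcv; auto.
        -- rewrite <- Eeq2. exact Econd.
      * pose proof (repl_subst theta'' Hrepl) as H. rewrite !subst_comp in H.
        rewrite (subst_ext _ theta s) in H; [exact H|].
        intros v Hv. simpl. apply Hrho''. auto.
  - intros sigma Hso [Hsv Hse].
    set (theta := fun v => sigma (rho v)).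
    assert (Hto : subst_ok theta).
    { intros v. unfold theta. rewrite <- (Hr2 v). apply Hso. }
    assert (Hsvpsi : forall x, In x (vars psi) -> is_val (sigma x)).
    { intros x Hx; apply Hsv, vars_cand; auto. }
    assert (Hsvdelta : forall x, In x (vars delta) -> is_val (sigma x)).
    { intros x Hx; apply Hsv, vars_cand; auto. }
    pose proof (eval_typed _ (proj1 Hdpsi) (proj2 Hdpsi) Hsvpsi Hso) as Tpsi.
    pose proof (eval_typed _ (proj1 Hdeta) (proj2 Hdeta) Hsvdelta Hso) as Tdelta.
    apply cand_eval in Hse; try tauto. destruct Hse as [Epsi Edelta].
    assert (Ephi : eval (subst sigma phi) = trueF L) by (apply (Hpsie sigma Hso Hsvpsi); auto).
    apply (Hde sigma Hso Hsvdelta) in Edelta.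
    assert (Hdvars : forall w, In w (vars (subst (fun v => Var L (rho v)) eta)) \/ In w (vars condg) -> In w (vars delta)).
    { intros w Hw. apply Hdv. apply vars_cand. auto. }
    assert (Hteta : forall v, In v (vars eta) -> is_val (theta v)).
    { intros v Hv. apply Hsvdelta, Hdvars. left. apply vars_subst. exists v. simpl; auto. }
    assert (Hsg : forall x, In x (vars (cond rl)) -> is_val (subst sigma (ga x))).
    { intros x Hx. destruct (Hgx x Hx) as [Hv|[w [Hw _]]].
      - rewrite is_val_subst; auto.
      - rewrite Hw. simpl. apply Hsvdelta, Hdvars. right. apply vars_subst.
        exists x. rewrite Hw. simpl; auto. }
    assert (Eeq1 : subst sigma (subst (fun v => Var L (rho v)) eta) = subst theta eta)
      by (rewrite subst_comp; reflexivity).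
    assert (Eeq2 : subst sigma condg = subst (fun x => subst sigma (ga x)) (cond rl))
      by (unfold condg; rewrite subst_comp; reflexivity).
    pose proof (eval_typed _ (proj1 Hceta) (proj2 Hceta) Hteta Hto) as Teta.
    pose proof (eval_typed _ (proj1 Hcc) (proj2 Hcc) Hsg (comp_ok Hso Hgok)) as Tcond.
    apply cand_eval in Edelta; rewrite ?Eeq1, ?Eeq2 in *; try tauto.
    destruct Edelta as [Eeta Econd].
    assert (Hthphi : forall x, In x (vars phi) -> theta x = sigma x).
    { intros x Hx. unfold theta. rewrite Hr1; auto. intros Hxs. apply (Hcx x Hxs Hx). }
    assert (Htphi : forall x, In x (vars phi) -> is_val (theta x)).
    { intros x Hx. rewrite Hthphi; auto. apply Hsvpsi, Hpsiv. auto. }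
    pose proof (eval_typed _ (proj1 Hcphi) (proj2 Hcphi) Htphi Hto) as Tphi.
    assert (Eeq3 : subst theta phi = subst sigma phi) by (apply subst_ext; auto).
    exists theta. split; [exact Hto|split].
    + split.
      * intros x Hx. apply vars_cand in Hx. destruct Hx; auto.
      * apply cand_eval; try tauto. rewrite Eeq3. auto.
    + exists rl, (fun x => subst sigma (ga x)). split; [exact Hrl|split; [apply comp_ok; auto|split]].
      * split.
        -- intros x [Hx|[Hx Hnl]]; apply Hsg; auto.
        -- exact Econd.
      * pose proof (repl_subst sigma Hrepl) as H. rewrite !subst_comp in H. exact H.
Qed.
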